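(* Assume $S^t(\mu,\nu)>0$ and let $X$ be $F^t$ conditioned on $F^t_{t+1}=r$. Then $$D(X_0\|F^t_0)+D(X_{-1}\mid X_0\,\|\,B^t_{-1}\mid B^t_0)\ \ge\ -\log\|\mu\|_2^2,$$ $$D(X_t\|B^t_t)+D(X_{t+1}\mid X_t\,\|\,F^t_{t+1}\mid F^t_t)\ \ge\ -\log\|\nu\|_2^2 .$$
   Context: $\Omega$ is a finite set, $S$ a symmetric substochastic matrix on $\Omega$ with nonnegative entries, $u,v$ nonnegative vectors with $\|u\|_2=\|v\|_2=1$, $\mu=u/\|u\|_1$, $\nu=v/\|v\|_1$, $t$ a positive integer, $S^t(\mu,\nu)=\sum_{x,y}\mu(x)S^t(x,y)\nu(y)$. Let $\Omega_\circ=\Omega\cup\{r\}$, $r\notin\Omega$, fix $z_0\in\Omega$. $F^t$ is the sub-probability walk on $\Omega_\circ$ at times $-1,\ldots,t+1$ with $\Pr[F^t=w]=\mu(w_0)\prod_{i=1}^tS(w_{i-1},w_i)\,c(w)$ for $w_{-1}=r$, $w_0,\ldots,w_t\in\Omega$, where $c(w)=\nu(w_t)$ if $w_{t+1}=r$, $1-\nu(w_t)$ if $w_{t+1}=z_0$, 0 otherwise. $B^t$ has $\Pr[B^t=w]=\nu(w_t)\prod_{i=1}^tS(w_i,w_{i-1})\,c'(w)$ for $w_{t+1}=r$, $w_0,\ldots,w_t\in\Omega$, with $c'(w)=\mu(w_0)$ if $w_{-1}=r$, $1-\mu(w_0)$ if $w_{-1}=z_0$, 0 otherwise. $X$ has $\Pr[X=w]=\Pr[F^t=w]/S^t(\mu,\nu)$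 for $w_{t+1}=r$. Divergence $D(p\|q)=\sum_xp(x)\log\frac{p(x)}{q(x)}$ (terms with $p(x)=0$ are 0, log base 2), applied to distribution functions of random variables; conditional divergence $D(A_1\mid A_2\,\|\,B_1\mid B_2)=\sum_a\Pr[A_2=a]\,D(\operatorname{dist}(A_1\mid A_2=a)\,\|\,\operatorname{dist}(B_1\mid B_2=a))$ with $\operatorname{dist}(B_1\mid B_2=a)(b)=\Pr[B_1=b,B_2=a]/\Pr[B_2=a]$. *)

(* Defs.v *)
From HB Require Import structures.
From mathcomp Require Import all_boot all_order all_algebra.
From mathcomp Require Import all_classical all_reals exp.
Set Implicit Arguments. Unset Strict Implicit. Unset Printing Implicit Defensive.
Import Order.TTheory GRing.Theory Num.Theory.
Local Open Scope ring_scope.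

Section Defs.
Variable R : realType.
Variable Omega : finType.

Definition log2 (x : R) : R := ln x / ln 2.

Fixpoint Spow (S : Omega -> Omega -> R) (n : nat) (x y : Omega) : R :=
  match n with
  | 0 => (x == y)%:R
  | n'.+1 => \sum_(z : Omega) Spow S n' x z * S z y
  end.

Definition l1normalize (u : Omega -> R) (x : Omega) : R :=
  u x / \sum_(y : Omega) `|u y|.

Definition Sbil (S : Omega -> Omega -> R) (t : nat) (mu nu : Omega -> R) : R :=
  \sum_(x : Omega) \sum_(y : Omega) mu x * Spow S t x y * nu y.

(* Omega_o = option Omega, with None playing the role of the extra point r.
   A walk at times -1, 0, ..., t+1 is w : 'I_(t+3) -> option Omega,
   where time k is stored at index k+1. *)
Definition walk (t : nat) := {ffun 'I_(t.+3) -> option Omega}.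

(* the entry at index j (i.e. time j-1) *)
Definition wat (t : nat) (w : walk t) (j : nat) : option Omega := w (inord j).

Definition inner_ok (t : nat) (w : walk t) : bool :=
  [forall j : 'I_(t.+3), ((1 <= j) && (j <= t.+1))%N ==> (w j != None)].

(* value (in Omega) at index j, meaningful when inner_ok *)
Definition wv (z0 : Omega) (t : nat) (w : walk t) (j : nat) : Omega :=
  odflt z0 (wat w j).

Definition PF (S : Omega -> Omega -> R) (mu nu : Omega -> R) (z0 : Omega)
    (t : nat) (w : walk t) : R :=
  if (wat w 0 == None) && inner_ok w then
    mu (wv z0 w 1) * (\prod_(1 <= i < t.+1) S (wv z0 w i) (wv z0 w i.+1)) *
    (if wat w t.+2 == None then nu (wv z0 w t.+1)
     else if wat w t.+2 == Some z0 then 1 - nu (wv z0 w t.+1) else 0)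
  else 0.

Definition PB (S : Omega -> Omega -> R) (mu nu : Omega -> R) (z0 : Omega)
    (t : nat) (w : walk t) : R :=
  if (wat w t.+2 == None) && inner_ok w then
    nu (wv z0 w t.+1) * (\prod_(1 <= i < t.+1) S (wv z0 w i.+1) (wv z0 w i)) *
    (if wat w 0 == None then mu (wv z0 w 1)
     else if wat w 0 == Some z0 then 1 - mu (wv z0 w 1) else 0)
  else 0.

(* Pr[X = w] : F^t conditioned on F^t_{t+1} = r *)
Definition PX (S : Omega -> Omega -> R) (mu nu : Omega -> R) (z0 : Omega)
    (t : nat) (w : walk t) : R :=
  if wat w t.+2 == None then PF S mu nu z0 w / Sbil S t mu nu else 0.

Definition marg (t : nat) (P : walk t -> R) (j : nat) (a : option Omega) : R :=
  \sum_(w : walk t | wat w j == a) P w.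

Definition joint (t : nat) (P : walk t -> R) (i j : nat) (b a : option Omega) : R :=
  \sum_(w : walk t | (wat w i == b) && (wat w j == a)) P w.

Local Open Scope ereal_scope.

Definition Dkl (T : finType) (p q : T -> R) : \bar R :=
  \sum_(x : T | (0 < p x)%R)
     (if (0 < q x)%R then ((p x * log2 (p x / q x))%R)%:E else +oo).

Definition condD (t : nat) (PA PQ : walk t -> R) (i j : nat) : \bar R :=
  \sum_(a : option Omega | (0 < marg PA j a)%R)
    (marg PA j a)%:E *
    Dkl (fun b => joint PA i j b a / marg PA j a)%R
        (fun b => joint PQ i j b a / marg PQ j a)%R.

End Defs.

(* Main.v *)
Require Import Defs.
From HB Require Import structures.
From mathcomp Require Import all_boot all_order all_algebra.
From mathcomp Require Import all_classical all_reals exp.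
From mathcomp Require Import ring lra zify.
Import Order.TTheory GRing.Theory Num.Theory.
Local Open Scope ring_scope.

Lemma sum_option (R : realType) (T : finType) (F : option T -> R) :
  \sum_(a : option T) F a = F None + \sum_(x : T) F (Some x).
Proof.
rewrite (bigD1 None) //=; congr (_ + _).
rewrite (reindex_omap Some id) //=; last by move=> [x|].
by apply: eq_bigl => x; rewrite eqxx.
Qed.

Section Chain.
Variable R : realType.
Variable Omega : finType.
Variable t : nat.
Local Notation W := (walk Omega t).

Definition upd (w : W) (j : 'I_(t.+3)) (y : option Omega) : W :=
  [ffun i => if i == j then y else w i].

Lemma sum_upd (F : W -> R) j c :
  \sum_w F w = \sum_(w : W | w j == c) \sum_y F (upd w j y).
Proof.
rewrite (partition_big (fun w : W => w j) predT) //=.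
rewrite exchange_big /=; apply: eq_bigr => y _.
rewrite (reindex_onto (fun w => upd w j y) (fun w => upd w j c)) /=.
  apply: eq_bigl => w; rewrite /upd ffunE eqxx eqxx /=.
  apply/eqP/eqP => [<-|wc]; first by rewrite ffunE eqxx.
  apply/ffunP => i; rewrite !ffunE; case: eqP => // ->; by rewrite wc.
move=> w /eqP wy; apply/ffunP => i; rewrite !ffunE.
by case: eqP => // ->.
Qed.

Lemma inord_eq (i j : nat) : (i <= t.+2)%N -> (j <= t.+2)%N ->
  ((inord i : 'I_(t.+3)) == inord j) = (i == j).
Proof.
move=> hi hj; apply/eqP/eqP => [h|->] //.
by have := congr1 val h; rewrite /= !inordK.
Qed.

Lemma wat_upd (w : W) i j y : (i <= t.+2)%N -> (j <= t.+2)%N ->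
  wat (upd w (inord j) y) i = if i == j then y else wat w i.
Proof. by move=> hi hj; rewrite /wat /upd ffunE inord_eq. Qed.


Lemma inord_val (j : 'I_(t.+3)) : inord (val j) = j.
Proof. by apply/val_inj; rewrite /= inordK. Qed.

Section ChainK.
Variable K : nat -> option Omega -> option Omega -> R.
Variable h : nat -> option Omega -> R.
Hypothesis hK : forall k a, (1 <= k <= t.+1)%N -> h k a = \sum_b K k a b * h k.+1 b.
Variable g : option Omega -> R.

Definition Qc k (w : W) := \prod_(1 <= i < k) K i (wat w i) (wat w i.+1).
Definition phi k (w : W) : bool :=
  [forall j : 'I_(t.+3), (k < j)%N ==> (w j == None)].
Definition psi (w : W) := (wat w 0 == None)%:R * g (wat w 1).

Lemma phiE k w : (k.+1 <= t.+2)%N ->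
  phi k w = (w (inord k.+1) == None) && phi k.+1 w.
Proof.
move=> kt; apply/forallP/andP.
  move=> H; split.
    by have := H (inord k.+1); rewrite inordK // ltnSn => /implyP; apply.
  apply/forallP => j; apply/implyP => hj.
  by have /implyP := H j; apply; apply: ltnW.
case=> [h1 /forallP h2] j; apply/implyP => hj.
have [->|jne] := eqVneq j (inord k.+1) => //.
have hj' : (k.+1 < j)%N.
  rewrite ltn_neqAle hj andbT; apply: contra jne => /eqP e.
  by apply/eqP/val_inj; rewrite /= inordK // e.
by have /implyP := h2 j; apply.
Qed.

Lemma chain_step k : (1 <= k <= t.+1)%N ->
  \sum_w psi w * Qc k.+1 w * h k.+1 (wat w k.+1) * (phi k.+1 w)%:R =
  \sum_w psi w * Qc k w * h k (wat w k) * (phi k w)%:R.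
Proof.
move=> /andP[k1 kt].
have kt2 : (k.+1 <= t.+2)%N by [].
rewrite (sum_upd _ (inord k.+1) None).
rewrite [RHS](eq_bigr (fun w : W => if w (inord k.+1) == None then
    psi w * Qc k w * h k (wat w k) * (phi k.+1 w)%:R else 0)); last first.
  by move=> w _; rewrite phiE //; case: (_ == None); rewrite /= ?mulr0.
rewrite -big_mkcond; apply: eq_bigr => w _.
have psiU y : psi (upd w (inord k.+1) y) = psi w.
  by rewrite /psi !wat_upd // (_ : (1 == k.+1) = false) //; lia.
have QU y : Qc k (upd w (inord k.+1) y) = Qc k w.
  apply: eq_big_nat => i /andP[i1 ik].
  rewrite !wat_upd //; try lia.
  rewrite (_ : (i == k.+1) = false); last by lia.
  by rewrite (_ : (i.+1 == k.+1) = false) //; lia.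
have QU' y : Qc k.+1 (upd w (inord k.+1) y) = Qc k w * K k (wat w k) y.
  rewrite /Qc big_nat_recr //= -/(Qc k _) QU !wat_upd //; try lia.
  by rewrite eqxx (_ : (k == k.+1) = false) //; lia.
have phiU y : phi k.+1 (upd w (inord k.+1) y) = phi k.+1 w.
  apply: eq_forallb => j; rewrite /upd ffunE.
  case: (ltnP k.+1 j) => // hj /=.
  rewrite (_ : (j == inord k.+1) = false) //; apply/negbTE.
  by apply: contraTneq hj => ->; rewrite inordK // ltnn.
under eq_bigr => y _ do rewrite psiU QU' phiU wat_upd // eqxx.
rewrite (hK k (wat w k)) ?k1 ?kt // mulr_sumr mulr_suml.
by apply: eq_bigr => y _; ring.
Qed.

Lemma chain_all m : (m <= t.+1)%N ->
  \sum_w psi w * Qc m.+1 w * h m.+1 (wat w m.+1) * (phi m.+1 w)%:R =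
  \sum_w psi w * h 1 (wat w 1) * (phi 1 w)%:R.
Proof.
elim: m => [_|m IH hm].
  by apply: eq_bigr => w _; rewrite /Qc big_geq // mulr1.
rewrite chain_step; last by apply/andP; split.
by apply: IH; apply: ltnW.
Qed.

Lemma single :
  \sum_w psi w * h 1 (wat w 1) * (phi 1 w)%:R = \sum_a g a * h 1 a.
Proof.
rewrite (partition_big (fun w : W => wat w 1) predT) //=; apply: eq_bigr => a _.
pose wa : W := [ffun j : 'I_(t.+3) => if j == inord 1 then a else None].
have key w : wat w 1 = a -> ((wat w 0 == None) && phi 1 w) = (w == wa).
  move=> w1; apply/andP/eqP.
    case=> /eqP w0 /forallP hphi; apply/ffunP => j; rewrite ffunE.
    case: eqP => [->|jne]; first by rewrite -w1.
    case: (ltnP 1 j) => hj; first by have /implyP := hphi j; move=> /(_ hj) /eqP.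
    have j0 : j = inord 0.
      apply/val_inj; rewrite /= inordK //.
      move: hj; rewrite leq_eqVlt => /orP[/eqP e|]; last by rewrite ltnS leqn0 => /eqP.
      by case: jne; apply/val_inj; rewrite /= inordK.
    by rewrite j0.
  move=> ->; split.
    by rewrite /wat ffunE inord_eq.
  apply/forallP => j; apply/implyP => hj; rewrite ffunE.
  rewrite (_ : (j == inord 1) = false) //; apply/negbTE.
  by apply: contraTneq hj => ->; rewrite inordK.
rewrite (eq_bigr (fun w : W => (w == wa)%:R * (g a * h 1 a))); last first.
  move=> w /eqP w1; rewrite -(key w w1) /psi w1.
  by case: (_ == None); case: (phi 1 w); rewrite /= ?mulr0 ?mul0r ?mulr1 ?mul1r.
rewrite -mulr_suml (bigD1 wa) /=; last by rewrite /wat ffunE eqxx.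
rewrite eqxx big1 ?addr0 ?mul1r // => w /andP[_ ne].
by rewrite (negbTE ne).
Qed.

Lemma chain_final :
  \sum_w psi w * Qc t.+2 w * h t.+2 (wat w t.+2) = \sum_a g a * h 1 a.
Proof.
rewrite -single -(@chain_all t.+1 (leqnn _)); apply: eq_bigr => w _.
rewrite (_ : phi t.+2 w = true) ?mulr1 //.
by apply/forallP => j; apply/implyP => hj; have := ltn_ord j; lia.
Qed.

End ChainK.

Section PFsec.
Variable S : Omega -> Omega -> R.
Variables mu nu : Omega -> R.
Variable z0 : Omega.
Hypothesis S0 : forall x y, 0 <= S x y.
Hypothesis S1 : forall x, \sum_y S x y <= 1.
Hypothesis nu0 : forall x, 0 <= nu x.
Hypothesis nu1 : forall x, nu x <= 1.
Hypothesis mu0 : forall x, 0 <= mu x.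

Definition Kt (i : nat) (a b : option Omega) : R :=
  if (i <= t)%N then
    (match a, b with Some x, Some y => S x y | _, _ => 0 end)
  else
    (match a with
     | Some x => if b == None then nu x else if b == Some z0 then 1 - nu x else 0
     | None => 0 end).

Definition optf (f : Omega -> R) (a : option Omega) : R :=
  match a with Some x => f x | None => 0 end.

Lemma inner_okP (w : W) :
  reflect (forall k, (1 <= k <= t.+1)%N -> wat w k != None) (inner_ok w).
Proof.
apply: (iffP forallP) => H k.
  move=> hk; have := H (inord k); rewrite inordK; last by lia.
  by move/implyP; apply.
apply/implyP => hk; have := H k hk; by rewrite /wat inord_val.
Qed.

Lemma wat_Some (w : W) k : inner_ok w -> (1 <= k <= t.+1)%N ->
  wat w k = Some (wv z0 w k).
Proof.
move=> /inner_okP H hk; have := H k hk; rewrite /wv.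
by case: (wat w k).
Qed.

Lemma PF_chain (w : W) :
  PF S mu nu z0 w = (wat w 0 == None)%:R * optf mu (wat w 1) * Qc Kt t.+2 w.
Proof.
rewrite /PF; case: (wat w 0 == None) => /=; last by rewrite !mul0r.
case ok: (inner_ok w) => /=.
  rewrite mul1r (wat_Some _ 1 ok) //= /Qc [X in _ = _ * X]big_nat_recr //= -mulrA; congr (_ * (_ * _)).
    apply: eq_big_nat => i /andP[i1 it].
    rewrite /Kt (_ : (i <= t)%N = true); last by lia.
    by rewrite !(wat_Some _ _ ok) //; lia.
  by rewrite /Kt ltnn (wat_Some _ t.+1 ok) //; lia.
have [k hk wk] : exists2 k, (1 <= k <= t.+1)%N & wat w k = None.
  move/negbT: ok; rewrite negb_forall => /existsP [j].
  rewrite negb_imply => /andP[hj /negPn /eqP wj].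
  by exists (val j) => //; rewrite /wat inord_val.
apply/esym/eqP; rewrite mulf_eq0; apply/orP; right.
rewrite prodf_seq_eq0; apply/hasP; exists k; first by rewrite mem_index_iota; lia.
by rewrite /= wk /Kt; case: (k <= t)%N.
Qed.

Fixpoint hrec (top : option Omega -> R) (m : nat) (a : option Omega) : R :=
  match m with
  | 0 => top a
  | m'.+1 => \sum_b Kt (t.+1 - m') a b * hrec top m' b
  end.

Definition hh top k := hrec top (t.+2 - k).

Lemma hhK top k a : (1 <= k <= t.+1)%N ->
  hh top k a = \sum_b Kt k a b * hh top k.+1 b.
Proof.
move=> hk; rewrite /hh (_ : t.+2 - k = (t.+1 - k).+1)%N; last by lia.
rewrite /= (_ : (t.+1 - (t.+1 - k) = k)%N); last by lia.
by rewrite (_ : (t.+2 - k.+1 = t.+1 - k)%N); last by lia.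
Qed.

Lemma path_sum top g :
  \sum_w (wat w 0 == None)%:R * g (wat w 1) * Qc Kt t.+2 w * top (wat w t.+2)
  = \sum_a g a * hrec top t.+1 a.
Proof.
have := @chain_final Kt (hh top) (hhK top) g.
rewrite /hh subnn (_ : (t.+2 - 1 = t.+1)%N) //.
Qed.

Lemma sum_PF_top top :
  \sum_(w : W) PF S mu nu z0 w * top (wat w t.+2) = \sum_a optf mu a * hrec top t.+1 a.
Proof.
rewrite -path_sum; apply: eq_bigr => w _; by rewrite PF_chain.
Qed.


Lemma SpowS m x z : Spow S m.+1 x z = \sum_y Spow S m x y * S y z.
Proof. by []. Qed.

Lemma sum_delta (T : finType) (x : T) (F : T -> R) :
  \sum_y (x == y)%:R * F y = F x.
Proof.
rewrite (bigD1 x) //= eqxx mul1r big1 ?addr0 // => y /negbTE.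
by rewrite eq_sym => ->; rewrite mul0r.
Qed.

Lemma Spow_left m x z : Spow S m.+1 x z = \sum_y S x y * Spow S m y z.
Proof.
elim: m x z => [|m IH] x z.
  rewrite SpowS /= sum_delta.
  rewrite (eq_bigr (fun y => (z == y)%:R * S x y)) ?sum_delta // => y _.
  by rewrite mulrC eq_sym.
rewrite SpowS; under eq_bigr do rewrite IH mulr_suml.
rewrite exchange_big; apply: eq_bigr => y _.
rewrite SpowS mulr_sumr; apply: eq_bigr => w _; ring.
Qed.

Lemma hrecS top m a :
  hrec top m.+1 a = \sum_b Kt (t.+1 - m) a b * hrec top m b.
Proof. by []. Qed.

Lemma hrec_None m : (m <= t)%N -> forall a,
  hrec (fun b => (b == None)%:R) m.+1 a =
  optf (fun x => \sum_y Spow S m x y * nu y) a.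
Proof.
elim: m => [_|m IH hm] a.
  rewrite hrecS subn0 sum_option /Kt ltnn.
  case: a => [x|] /=; last by rewrite mul0r add0r big1 // => y _; rewrite mul0r.
  rewrite mulr1 big1 ?addr0; last by move=> y _; rewrite mulr0.
  by rewrite sum_delta.
rewrite hrecS; under eq_bigr do rewrite IH ?(ltnW hm) //.
rewrite /Kt (_ : (t.+1 - m.+1 <= t)%N = true); last by lia.
rewrite sum_option; case: a => [x|] /=; last first.
  by rewrite mul0r add0r big1 // => y _; rewrite mul0r.
rewrite mul0r add0r.
under [RHS]eq_bigr do rewrite -SpowS Spow_left mulr_suml.
rewrite exchange_big; apply: eq_bigr => y _ /=.
rewrite mulr_sumr; apply: eq_bigr => z _; ring.
Qed.

Lemma sumPF_None :
  \sum_(w : W) PF S mu nu z0 w * (wat w t.+2 == None)%:R = Sbil S t mu nu.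
Proof.
rewrite (sum_PF_top (fun b => (b == None)%:R)) sum_option mul0r add0r.
under eq_bigr do rewrite hrec_None //.
rewrite /Sbil; apply: eq_bigr => x _; rewrite mulr_sumr.
by apply: eq_bigr => y _; rewrite /= mulrA.
Qed.

Lemma Kt_ge0 i a b : 0 <= Kt i a b.
Proof.
rewrite /Kt; case: ifP => _; case: a => [x|]; case: b => [y|] //=.
by case: ifP => _ //; rewrite subr_ge0.
Qed.

Lemma Kt_sum i a : \sum_b Kt i a b <= 1.
Proof.
rewrite /Kt; case: (i <= t)%N; case: a => [x|]; rewrite sum_option /=.
- by rewrite add0r.
- by rewrite add0r big1.
- rewrite (eq_bigr (fun y => if y == z0 then 1 - nu x else 0)) //.
  by rewrite -big_mkcond /= big_pred1_eq; lra.
- by rewrite add0r big1.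
Qed.

Lemma hrec1_bd m a : 0 <= hrec (fun _ => 1) m a <= 1.
Proof.
elim: m a => [|m IH] a; first by rewrite /= ler01 lexx.
rewrite hrecS; apply/andP; split.
  by apply: sumr_ge0 => b _; apply: mulr_ge0; [apply: Kt_ge0 | case/andP: (IH b)].
apply: le_trans (Kt_sum (t.+1 - m) a); apply: ler_sum => b _.
by apply: ler_piMr; [apply: Kt_ge0 | case/andP: (IH b)].
Qed.

Lemma marg_sum (P : W -> R) j a :
  marg P j a = \sum_w (wat w j == a)%:R * P w.
Proof.
rewrite /marg big_mkcond; apply: eq_bigr => w _.
by case: (_ == a); rewrite ?mul1r ?mul0r.
Qed.

Lemma margPF_le x : marg (PF S mu nu z0 (t:=t)) 1 (Some x) <= mu x.
Proof.
rewrite marg_sum.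
rewrite (eq_bigr (fun w => (wat w 0 == None)%:R *
   ((fun a => (a == Some x)%:R * optf mu a) (wat w 1)) * Qc Kt t.+2 w *
   (fun _ => 1) (wat w t.+2))); last first.
  by move=> w _; rewrite PF_chain /=; ring.
rewrite (path_sum (fun _ => 1) (fun a => (a == Some x)%:R * optf mu a)) sum_option /= mul0r mul0r add0r.
rewrite (eq_bigr (fun y => (x == y)%:R * (mu y * hrec (fun _ => 1) t.+1 (Some y)))).
  rewrite sum_delta; apply: ler_piMr => //.
  by case/andP: (hrec1_bd t.+1 (Some x)).
by move=> y _; rewrite hrecS -mulrA; congr (_ * _); rewrite eq_sym.
Qed.

Lemma PF_ge0 (w : W) : 0 <= PF S mu nu z0 w.
Proof.
rewrite PF_chain; apply: mulr_ge0; last by apply: prodr_ge0 => i _; apply: Kt_ge0.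
by apply: mulr_ge0; [rewrite ler0n | case: (wat w 1) => //=].
Qed.

End PFsec.

Definition rev (w : W) : W := [ffun j => w (rev_ord j)].

Lemma revK : involutive rev.
Proof. by move=> w; apply/ffunP => j; rewrite !ffunE rev_ordK. Qed.

Lemma wat_rev (w : W) k : (k <= t.+2)%N -> wat (rev w) k = wat w (t.+2 - k).
Proof.
move=> hk; rewrite /wat ffunE; congr (w _); apply/val_inj.
rewrite /= !inordK; lia.
Qed.

Lemma inner_ok_rev (w : W) : inner_ok (rev w) = inner_ok w.
Proof.
apply/inner_okP/inner_okP => H k hk.
  have := H (t.+2 - k)%N; rewrite wat_rev; last by lia.
  rewrite (_ : (t.+2 - (t.+2 - k) = k)%N); last by lia.
  by apply; lia.
rewrite wat_rev; last by lia.
by apply: H; lia.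
Qed.

Lemma wv_rev (z0 : Omega) (w : W) k : (k <= t.+2)%N ->
  wv z0 (rev w) k = wv z0 w (t.+2 - k).
Proof. by move=> hk; rewrite /wv wat_rev. Qed.

Lemma PB_rev (S : Omega -> Omega -> R) (mu nu : Omega -> R) (z0 : Omega) (w : W) : PB S mu nu z0 w = PF S nu mu z0 (rev w).
Proof.
rewrite /PB /PF inner_ok_rev !wat_rev // subn0 subnn.
rewrite !wv_rev // (_ : (t.+2 - 1 = t.+1)%N); last by lia.
rewrite (_ : (t.+2 - t.+1 = 1)%N); last by lia.
case: (_ && _) => //; congr (_ * _ * _).
rewrite big_nat_rev /=; apply: eq_big_nat => i /andP[i1 it].
rewrite !wv_rev; try lia.
congr (S (wv z0 w _) (wv z0 w _)); lia.
Qed.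

Lemma sum_marg (P : W -> R) j : \sum_a marg P j a = \sum_w P w.
Proof.
rewrite [RHS](partition_big (fun w : W => wat w j) predT) //.
Qed.

Lemma joint_sum (P : W -> R) i j b a :
  joint P i j b a = \sum_w ((wat w i == b) && (wat w j == a))%:R * P w.
Proof.
rewrite /joint big_mkcond; apply: eq_bigr => w _.
by case: (_ && _); rewrite ?mul1r ?mul0r.
Qed.

Definition swp (z0 : Omega) (b : option Omega) : option Omega :=
  match b with None => Some z0 | Some z => if z == z0 then None else Some z end.

Lemma swp_inv z0 b : swp z0 (swp z0 b) = b.
Proof.
case: b => [z|] /=; last by rewrite eqxx.
by case: (eqVneq z z0) => [->|/negbTE ne] /=; rewrite ?eqxx ?ne.
Qed.

Lemma swp_z0 z0 b : (swp z0 b == Some z0) = (b == None).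
Proof.
case: b => [z|]; last by rewrite !eqxx.
case: (eqVneq z z0) => [->|ne] /=; first by rewrite eqxx.
rewrite (negbTE ne); apply/eqP => -[e]; by rewrite e eqxx in ne.
Qed.

Definition sw z0 j0 (w : W) : W := upd w (inord j0) (swp z0 (wat w j0)).

Lemma wat_sw_ne z0 j0 (w : W) k : (j0 <= t.+2)%N -> (k <= t.+2)%N -> k != j0 ->
  wat (sw z0 j0 w) k = wat w k.
Proof. by move=> hj hk ne; rewrite /sw wat_upd // (negbTE ne). Qed.

Lemma wat_sw_eq z0 j0 (w : W) : (j0 <= t.+2)%N ->
  wat (sw z0 j0 w) j0 = swp z0 (wat w j0).
Proof. by move=> hj; rewrite /sw wat_upd // eqxx. Qed.

Lemma sw_inv z0 j0 : (j0 <= t.+2)%N -> involutive (sw z0 j0).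
Proof.
move=> hj w; apply/ffunP => i; rewrite {1}/sw /upd ffunE wat_sw_eq // swp_inv.
case: eqP => [->|ne] //; by rewrite /sw /upd ffunE; case: eqP.
Qed.

Lemma inner_ok_sw z0 j0 (w : W) : (j0 == 0)%N || (j0 == t.+2) ->
  inner_ok (sw z0 j0 w) = inner_ok w.
Proof.
move=> hj0; have hj : (j0 <= t.+2)%N by case/orP: hj0 => /eqP ->.
apply/inner_okP/inner_okP => H k hk.
  by have := H k hk; rewrite wat_sw_ne //; [lia | case/orP: hj0 => /eqP ->; lia].
by rewrite wat_sw_ne //; [apply: H | lia | case/orP: hj0 => /eqP ->; lia].
Qed.

Lemma wv_sw z0 j0 (w : W) k : (j0 <= t.+2)%N -> (k <= t.+2)%N -> k != j0 ->
  wv z0 (sw z0 j0 w) k = wv z0 w k.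
Proof. by move=> *; rewrite /wv wat_sw_ne. Qed.

Section Facts.
Variable S : Omega -> Omega -> R.
Variables mu nu : Omega -> R.
Variable z0 : Omega.
Hypothesis S0 : forall x y, 0 <= S x y.
Hypothesis Ssym : forall x y, S x y = S y x.
Hypothesis S1 : forall x, \sum_y S x y <= 1.
Hypothesis mu0 : forall x, 0 <= mu x.
Hypothesis mu1 : forall x, mu x <= 1.
Hypothesis nu0 : forall x, 0 <= nu x.
Hypothesis nu1 : forall x, nu x <= 1.
Hypothesis Z0 : 0 < Sbil S t mu nu.
Local Notation Z := (Sbil S t mu nu).
Local Notation PFw := (PF S mu nu z0 (t:=t)).
Local Notation PBw := (PB S mu nu z0 (t:=t)).
Local Notation PXw := (PX S mu nu z0 (t:=t)).

Lemma PFge w : 0 <= PFw w.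
Proof. by apply: PF_ge0. Qed.

Lemma PBge w : 0 <= PBw w.
Proof. by rewrite PB_rev; apply: PF_ge0. Qed.

Lemma PXE w : PXw w = (wat w t.+2 == None)%:R * PFw w / Z.
Proof. by rewrite /PX; case: ifP; rewrite ?mul1r ?mul0r. Qed.

Lemma PF0 w : (wat w 0 == None) = false -> PFw w = 0.
Proof. by rewrite /PF => ->. Qed.

Lemma PFinner w : inner_ok w = false -> PFw w = 0.
Proof. by rewrite /PF => ->; rewrite andbF. Qed.

Lemma PB2 w : (wat w t.+2 == None) = false -> PBw w = 0.
Proof. by rewrite /PB => ->. Qed.

Lemma PFB w : wat w 0 = None -> wat w t.+2 = None -> PFw w = PBw w.
Proof.
move=> e0 e2; rewrite /PF /PB e0 e2 eqxx /=; case: (inner_ok w) => //.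
under eq_bigr do rewrite Ssym.
ring.
Qed.

Lemma sumPX : \sum_w PXw w = 1.
Proof.
rewrite (eq_bigr (fun w => PFw w * (wat w t.+2 == None)%:R * Z^-1)); last first.
  by move=> w _; rewrite PXE; ring.
by rewrite -mulr_suml sumPF_None mulfV // gt_eqF.
Qed.

Lemma margPX_None j : (1 <= j <= t.+1)%N -> marg PXw j None = 0.
Proof.
move=> hj; rewrite /marg big1 // => w /eqP wj.
rewrite PXE PFinner ?mulr0 ?mul0r //.
apply/negbTE/negP => /inner_okP H; by move: (H j hj); rewrite wj.
Qed.

Lemma Zne0 : Z != 0. Proof. by rewrite gt_eqF. Qed.

Lemma P1_H3 b a : joint PXw 0 1 b a = (b == None)%:R * marg PXw 1 a.
Proof.
rewrite joint_sum marg_sum mulr_sumr; apply: eq_bigr => w _.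
case e: (wat w 0 == None).
  move/eqP: e => ->; rewrite eq_sym.
  by case: (b == None); case: (wat w 1 == a); rewrite /= ?mul1r ?mul0r.
by rewrite PXE PF0 // !(mulr0, mul0r).
Qed.

Lemma P1_H4 a : joint PBw 0 1 None a = Z * marg PXw 1 a.
Proof.
rewrite joint_sum marg_sum mulr_sumr; apply: eq_bigr => w _.
case e0: (wat w 0 == None); last by rewrite PXE PF0 // /= !(mulr0, mul0r).
case e2: (wat w t.+2 == None); last by rewrite PXE PB2 // e2 /= !(mulr0, mul0r).
rewrite PXE e2 -(PFB _ (eqP e0) (eqP e2)) /=.
by field; apply: Zne0.
Qed.

Lemma P1_q a : Z * marg PXw 1 a <= marg PFw 1 a.
Proof.
rewrite !marg_sum mulr_sumr; apply: ler_sum => w _.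
rewrite PXE (_ : Z * ((wat w 1 == a)%:R * ((wat w t.+2 == None)%:R * PFw w / Z))
   = (wat w t.+2 == None)%:R * ((wat w 1 == a)%:R * PFw w)); last first.
  by field; apply: Zne0.
apply: ler_piMl; first by apply: mulr_ge0; [rewrite ler0n | apply: PFge].
by case: (_ == None).
Qed.

Definition coreB (w : W) := if (wat w t.+2 == None) && inner_ok w then
    nu (wv z0 w t.+1) * (\prod_(1 <= i < t.+1) S (wv z0 w i.+1) (wv z0 w i)) else 0.
Definition cB (w : W) := if wat w 0 == None then mu (wv z0 w 1)
     else if wat w 0 == Some z0 then 1 - mu (wv z0 w 1) else 0.

Lemma PB_split w : PBw w = coreB w * cB w.
Proof. by rewrite /PB /coreB /cB; case: ifP; rewrite ?mul0r. Qed.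

Lemma coreB_sw w : coreB (sw z0 0 w) = coreB w.
Proof.
rewrite /coreB inner_ok_sw // wat_sw_ne // wv_sw //.
congr (if _ then _ * _ else _); apply: eq_big_nat => i /andP[i1 it]; rewrite !wv_sw //; lia.
Qed.

Lemma P1_mQ x : mu x * marg PBw 1 (Some x) = joint PBw 0 1 None (Some x).
Proof.
have E : marg PBw 1 (Some x) = joint PBw 0 1 None (Some x) +
                               joint PBw 0 1 (Some z0) (Some x).
  rewrite marg_sum !joint_sum -big_split; apply: eq_bigr => w _ /=.
  case e: (wat w 0) => [z|] /=; last by rewrite mul0r addr0.
  case: (eqVneq z z0) => [->|ne]; first by rewrite eqxx /= mul0r add0r.
  have nz : (Some z == Some z0) = false by apply/eqP => -[] /eqP; rewrite (negbTE ne).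
  by rewrite nz PB_split /cB e /= nz /= !(mulr0, mul0r, addr0).
rewrite E [joint PBw 0 1 (Some z0) (Some x)]joint_sum.
rewrite (reindex_inj (inv_inj (sw_inv z0 0 (leq0n _)))) /=.
rewrite joint_sum mulrDr mulr_sumr mulr_sumr -big_split /=.
apply: eq_bigr => w _.
rewrite wat_sw_eq // wat_sw_ne // swp_z0.
case e0: (wat w 0 == None); case e1: (wat w 1 == Some x); rewrite /= ?mul0r ?mulr0 ?addr0 //.
rewrite !mul1r !PB_split coreB_sw /cB wat_sw_eq // (eqP e0) /= eqxx.
rewrite wv_sw // /wv (eqP e1) /=; ring.
Qed.

Lemma P2_H3 b a : joint PXw t.+2 t.+1 b a = (b == None)%:R * marg PXw t.+1 a.
Proof.
rewrite joint_sum marg_sum mulr_sumr; apply: eq_bigr => w _.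
case e: (wat w t.+2 == None).
  move/eqP: e => ->; rewrite eq_sym.
  by case: (b == None); case: (wat w t.+1 == a); rewrite /= ?mul1r ?mul0r.
by rewrite PXE e !(mulr0, mul0r).
Qed.

Lemma P2_H4 a : joint PFw t.+2 t.+1 None a = Z * marg PXw t.+1 a.
Proof.
rewrite joint_sum marg_sum mulr_sumr; apply: eq_bigr => w _.
rewrite PXE; case: (wat w t.+2 == None); rewrite /= ?mul0r ?mulr0 //.
by field; apply: Zne0.
Qed.

Lemma P2_q a : Z * marg PXw t.+1 a <= marg PBw t.+1 a.
Proof.
rewrite !marg_sum mulr_sumr; apply: ler_sum => w _.
rewrite PXE (_ : Z * ((wat w t.+1 == a)%:R * ((wat w t.+2 == None)%:R * PFw w / Z))
   = (wat w t.+1 == a)%:R * ((wat w t.+2 == None)%:R * PFw w)); last first.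
  by field; apply: Zne0.
apply: ler_wpM2l; first by rewrite ler0n.
case e2: (wat w t.+2 == None); rewrite /= ?mul0r ?PBge // mul1r.
case e0: (wat w 0 == None); last by rewrite PF0 // PBge.
by rewrite (PFB _ (eqP e0) (eqP e2)).
Qed.

Definition coreF (w : W) := if (wat w 0 == None) && inner_ok w then
    mu (wv z0 w 1) * (\prod_(1 <= i < t.+1) S (wv z0 w i) (wv z0 w i.+1)) else 0.
Definition cF (w : W) := if wat w t.+2 == None then nu (wv z0 w t.+1)
     else if wat w t.+2 == Some z0 then 1 - nu (wv z0 w t.+1) else 0.

Lemma PF_split w : PFw w = coreF w * cF w.
Proof. by rewrite /PF /coreF /cF; case: ifP; rewrite ?mul0r. Qed.

Lemma coreF_sw w : coreF (sw z0 t.+2 w) = coreF w.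
Proof.
rewrite /coreF inner_ok_sw ?eqxx ?orbT // wat_sw_ne // wv_sw //.
congr (if _ then _ * _ else _); apply: eq_big_nat => i /andP[i1 it]; rewrite !wv_sw //; lia.
Qed.

Lemma P2_mQ x : nu x * marg PFw t.+1 (Some x) = joint PFw t.+2 t.+1 None (Some x).
Proof.
have E : marg PFw t.+1 (Some x) = joint PFw t.+2 t.+1 None (Some x) +
                               joint PFw t.+2 t.+1 (Some z0) (Some x).
  rewrite marg_sum !joint_sum -big_split; apply: eq_bigr => w _ /=.
  case e: (wat w t.+2) => [z|] /=; last by rewrite mul0r addr0.
  case: (eqVneq z z0) => [->|ne]; first by rewrite eqxx /= mul0r add0r.
  have nz : (Some z == Some z0) = false by apply/eqP => -[] /eqP; rewrite (negbTE ne).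
  by rewrite nz PF_split /cF e /= nz /= !(mulr0, mul0r, addr0).
rewrite E [joint PFw t.+2 t.+1 (Some z0) (Some x)]joint_sum.
rewrite (reindex_inj (inv_inj (sw_inv z0 t.+2 (leqnn _)))) /=.
rewrite joint_sum mulrDr mulr_sumr mulr_sumr -big_split /=.
apply: eq_bigr => w _.
have ne12 : t.+1 != t.+2 by lia.
rewrite wat_sw_eq // wat_sw_ne // swp_z0.
case e0: (wat w t.+2 == None); case e1: (wat w t.+1 == Some x); rewrite /= ?mul0r ?mulr0 ?addr0 //.
rewrite !mul1r !PF_split coreF_sw /cF wat_sw_eq // (eqP e0) /= eqxx.
rewrite wv_sw // /wv (eqP e1) /=; ring.
Qed.

Lemma marg_PB_rev a : marg PBw t.+1 a = marg (PF S nu mu z0 (t:=t)) 1 a.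
Proof.
rewrite !marg_sum [RHS](reindex_inj (inv_inj revK)) /=.
by apply: eq_bigr => w _; rewrite -PB_rev wat_rev.
Qed.

Lemma P2_qm x : marg PBw t.+1 (Some x) <= nu x.
Proof. by rewrite marg_PB_rev; apply: margPF_le. Qed.

End Facts.
End Chain.

Lemma ln_le_sub1 {R : realType} (y : R) : 0 < y -> ln y <= y - 1.
Proof.
move=> y0; have := @le_ln1Dx R (y - 1).
rewrite addrCA subrr addr0; apply; lra.
Qed.

Lemma gibbs (R : realType) (I : finType) (p r : I -> R) :
  (forall a, 0 <= p a) -> \sum_a p a = 1 ->
  (forall a, 0 < p a -> 0 < r a) ->
  - log2 (\sum_(a | 0 < p a) r a) <= \sum_(a | 0 < p a) p a * log2 (p a / r a).
Proof.
move=> p0 p1 rpos.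
have [a0 pa0] : exists a, 0 < p a.
  apply/existsP; apply: contraT; rewrite negb_exists => /forallP H.
  have : \sum_a p a = 0 by apply: big1 => a _; have := H a; have := p0 a; lra.
  by rewrite p1; lra.
set A := \sum_(a | 0 < p a) r a.
have A0 : 0 < A.
  rewrite /A (bigD1 a0) //=; apply: ltr_pwDl; first exact: rpos.
  by apply: sumr_ge0 => a /andP[/rpos/ltW].
have p1' : \sum_(a | 0 < p a) p a = 1.
  rewrite -p1 [RHS](bigID (fun a => 0 < p a)) /= [X in _ = _ + X]big1 ?addr0 //.
  by move=> a; have := p0 a; lra.
have key : 0 <= \sum_(a | 0 < p a) (p a * ln (p a / r a) + p a * ln A).
  have E : \sum_(a | 0 < p a) (p a - r a / A) = 0.
    by rewrite sumrB p1' -mulr_suml -/A divff ?subrr //; lra.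
  apply: le_trans (_ : _ <= \sum_(a | 0 < p a) (p a - r a / A)) _; first by rewrite E.
  apply: ler_sum => a pa; have ra := rpos a pa.
  have y0 : 0 < r a / (p a * A) by apply: divr_gt0 => //; apply: mulr_gt0.
  have := ln_le_sub1 _ y0.
  rewrite -mulrDr -lnM ?posrE; last 2 first.
  - by apply: divr_gt0.
  - done.
  have -> : p a / r a * A = (r a / (p a * A))^-1.
    by rewrite invfM invrK; field; rewrite gt_eqF.
  rewrite lnV ?posrE // => h.
  have -> : p a - r a / A = p a * (1 - r a / (p a * A)).
    by field; apply/andP; split; lra.
  by rewrite ler_pM2l //; lra.
have ln2 : 0 < ln (2 : R) by apply: ln_gt0; lra.
rewrite /log2.
under eq_bigr => a _ do rewrite mulrA.
rewrite -mulr_suml -mulNr ler_pM2r ?invr_gt0 //.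
move: key; rewrite big_split /= -mulr_suml p1' mul1r; lra.
Qed.

Lemma log2_div (R : realType) (x y : R) : 0 < x -> 0 < y ->
  log2 (x / y) = log2 x - log2 y.
Proof. by move=> x0 y0; rewrite /log2 ln_div ?posrE // mulrBl. Qed.

Lemma log2M (R : realType) (x y : R) : 0 < x -> 0 < y ->
  log2 (x * y) = log2 x + log2 y.
Proof. by move=> x0 y0; rewrite /log2 lnM ?posrE // mulrDl. Qed.

Lemma ler_log2 (R : realType) (x y : R) : 0 < x -> 0 < y -> x <= y ->
  log2 x <= log2 y.
Proof.
move=> x0 y0 xy; rewrite /log2 ler_pM2r ?invr_gt0; last by apply: ln_gt0; lra.
by rewrite ler_ln ?posrE.
Qed.

Lemma assembly (R : realType) (Omega : finType) (p q : option Omega -> R)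
  (jA jQ : option Omega -> option Omega -> R) (mQ : option Omega -> R)
  (m : Omega -> R) (Z : R) :
  0 < Z -> (forall a, 0 <= p a) -> \sum_a p a = 1 -> p None = 0 ->
  (forall b a, jA b a = (b == None)%:R * p a) ->
  (forall a, jQ None a = Z * p a) ->
  (forall x, m x * mQ (Some x) = jQ None (Some x)) ->
  (forall a, Z * p a <= q a) ->
  (forall x, q (Some x) <= m x) ->
  (forall x, 0 <= m x) ->
  ((- log2 (\sum_x m x ^+ 2))%:E <= Dkl p q +
     \sum_(a | (0 < p a)%R) (p a)%:E *
        Dkl (fun b => jA b a / p a)%R (fun b => jQ b a / mQ a)%R)%E.
Proof.
move=> Z0 p0 p1 pN hjA hjQ hmQ hq hqm m0.
pose m' a := if a is Some x then m x else 0.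
have supp a : 0 < p a -> [/\ 0 < q a, 0 < m' a & 0 < Z * p a].
  case: a => [x|]; last by rewrite pN ltxx.
  move=> pa; have Zp : 0 < Z * p (Some x) by apply: mulr_gt0.
  have := hq (Some x); have := hqm x; rewrite /=; split => //; lra.
have -> : Dkl p q = (\sum_(a | 0 < p a) p a * log2 (p a / q a))%:E.
  rewrite /Dkl -sumEFin; apply: eq_bigr => a pa.
  by case: (supp a pa) => -> _ _.
have -> : (\sum_(a | (0 < p a)%R) (p a)%:E *
        Dkl (fun b => jA b a / p a)%R (fun b => jQ b a / mQ a)%R)%E
    = (\sum_(a | 0 < p a) p a * - log2 (m' a))%:E.
  rewrite -sumEFin; apply: eq_bigr => a pa.
  case: (supp a pa) => qa ma Zpa.
  have -> : (fun b => jA b a / p a) = (fun b => (b == None)%:R).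
    by apply: funext => b; rewrite hjA mulrK // unitfE gt_eqF.
  rewrite /Dkl (eq_bigl (pred1 None)); last first.
    by move=> b /=; case: (b == None); rewrite ?ltr01 ?ltxx.
  rewrite big_pred1_eq eqxx.
  case: a pa qa ma Zpa => [x|] pa qa ma Zpa; last by rewrite pN ltxx in pa.
  rewrite /= in ma.
  have -> : jQ None (Some x) / mQ (Some x) = m x.
    have E := hmQ x; rewrite hjQ in E *.
    have mQ0 : mQ (Some x) != 0.
      by apply: contraTneq Zpa => h; rewrite -E h mulr0 ltxx.
    by rewrite -E mulrK // unitfE.
  rewrite ma mul1r div1r /log2 lnV ?posrE // mulNr.
  by rewrite -EFinM.
rewrite -EFinD -big_split /= lee_fin.
have E : \sum_(a | 0 < p a) (p a * log2 (p a / q a) + p a * - log2 (m' a))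
   = \sum_(a | 0 < p a) p a * log2 (p a / (q a * m' a)).
  apply: eq_bigr => a pa; case: (supp a pa) => qa ma _.
  rewrite !log2_div ?mulr_gt0 // log2M //; ring.
rewrite E; apply: le_trans (@gibbs _ _ p (fun a => q a * m' a) p0 p1 _); last first.
  by move=> a pa; case: (supp a pa) => qa ma _; apply: mulr_gt0.
rewrite lerN2; have [a0 pa0] : exists a, 0 < p a.
  apply/existsP; apply: contraT; rewrite negb_exists => /forallP H.
  have : \sum_a p a = 0 by apply: big1 => a _; have := H a; have := p0 a; lra.
  by rewrite p1; lra.
have r0 a : 0 <= q a * m' a.
  apply: mulr_ge0; first by have := hq a; have := p0 a; nra.
  by case: a => //= x.
have A0 : 0 < \sum_(a | 0 < p a) q a * m' a.
  rewrite (bigD1 a0) //=; apply: ltr_pwDl.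
    by case: (supp a0 pa0) => qa ma _; apply: mulr_gt0.
  by apply: sumr_ge0 => a _.
have B : \sum_(a | 0 < p a) q a * m' a <= \sum_x m x ^+ 2.
  apply: le_trans (_ : _ <= \sum_a q a * m' a) _.
    rewrite [leRHS](bigID (fun a => 0 < p a)) /= lerDl.
    by apply: sumr_ge0 => a _.
  rewrite sum_option /= mulr0 add0r; apply: ler_sum => x _.
  by rewrite expr2 ler_wpM2r.
exact: ler_log2 A0 (lt_le_trans A0 B) B.
Qed.


Lemma l1_bd (R : realType) (Omega : finType) (u : Omega -> R) :
  (forall x, 0 <= u x) -> forall x, 0 <= l1normalize u x <= 1.
Proof.
move=> u0 x; rewrite /l1normalize.
have s0 : 0 <= \sum_y `|u y| by apply: sumr_ge0 => y _.
case: (eqVneq (\sum_y `|u y|) 0) => [->|ne]; first by rewrite invr0 mulr0 lexx ler01.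
have sp : 0 < \sum_y `|u y| by rewrite lt_neqAle eq_sym ne.
rewrite divr_ge0 //= ler_pdivrMr // mul1r.
rewrite (bigD1 x) //= ger0_norm // lerDl; by apply: sumr_ge0 => y _.
Qed.

Local Open Scope ereal_scope.

Theorem lemma3p6 (R : realType) (Omega : finType)
  (S : Omega -> Omega -> R) (u v : Omega -> R) (z0 : Omega) (t : nat) :
  (0 < t)%N ->
  (forall x y, (0 <= S x y)%R) ->
  (forall x y, S x y = S y x) ->
  (forall x, (\sum_(y : Omega) S x y <= 1)%R) ->
  (forall x, (0 <= u x)%R) -> (forall x, (0 <= v x)%R) ->
  (Num.sqrt (\sum_(x : Omega) u x ^+ 2) = 1)%R ->
  (Num.sqrt (\sum_(x : Omega) v x ^+ 2) = 1)%R ->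
  let mu := l1normalize u in
  let nu := l1normalize v in
  (0 < Sbil S t mu nu)%R ->
  ((Dkl (marg (PX S mu nu z0 (t:=t)) 1) (marg (PF S mu nu z0 (t:=t)) 1)
     + condD (PX S mu nu z0 (t:=t)) (PB S mu nu z0 (t:=t)) 0 1
    >= ((- log2 (Num.sqrt (\sum_(x : Omega) mu x ^+ 2) ^+ 2))%R)%:E)
  /\
  (Dkl (marg (PX S mu nu z0 (t:=t)) t.+1) (marg (PB S mu nu z0 (t:=t)) t.+1)
     + condD (PX S mu nu z0 (t:=t)) (PF S mu nu z0 (t:=t)) t.+2 t.+1
    >= ((- log2 (Num.sqrt (\sum_(x : Omega) nu x ^+ 2) ^+ 2))%R)%:E)).
Proof.
move=> _ S0 Ssym S1 u0 v0 _ _ mu nu Z0.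
have mu0 x : (0 <= mu x)%R by case/andP: (@l1_bd _ _ u u0 x).
have mu1 x : (mu x <= 1)%R by case/andP: (@l1_bd _ _ u u0 x).
have nu0 x : (0 <= nu x)%R by case/andP: (@l1_bd _ _ v v0 x).
have nu1 x : (nu x <= 1)%R by case/andP: (@l1_bd _ _ v v0 x).
rewrite !sqr_sqrtr; last 2 first.
- by apply: sumr_ge0 => x _; apply: sqr_ge0.
- by apply: sumr_ge0 => x _; apply: sqr_ge0.
have PXge (w : walk Omega t) : (0 <= PX S mu nu z0 w)%R.
  rewrite PXE; apply: divr_ge0; last exact: ltW.
  by apply: mulr_ge0; [rewrite ler0n | apply: PFge].
have pge j a : (0 <= marg (PX S mu nu z0 (t:=t)) j a)%R.
  by apply: sumr_ge0 => w _.
have p1 j : (\sum_a marg (PX S mu nu z0 (t:=t)) j a = 1)%R.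
  by rewrite sum_marg; apply: sumPX.
split.
- apply: (@assembly R Omega (marg (PX S mu nu z0 (t:=t)) 1) (marg (PF S mu nu z0 (t:=t)) 1)
    (fun b a => joint (PX S mu nu z0 (t:=t)) 0 1 b a)
    (fun b a => joint (PB S mu nu z0 (t:=t)) 0 1 b a)
    (marg (PB S mu nu z0 (t:=t)) 1) mu (Sbil S t mu nu)) => //.
  + by apply: margPX_None.
  + by move=> b a; apply: P1_H3.
  + by move=> a; apply: P1_H4.
  + by move=> x; apply: P1_mQ.
  + by move=> a; apply: P1_q.
  + by move=> x; apply: margPF_le.
- apply: (@assembly R Omega (marg (PX S mu nu z0 (t:=t)) t.+1) (marg (PB S mu nu z0 (t:=t)) t.+1)
    (fun b a => joint (PX S mu nu z0 (t:=t)) t.+2 t.+1 b a)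
    (fun b a => joint (PF S mu nu z0 (t:=t)) t.+2 t.+1 b a)
    (marg (PF S mu nu z0 (t:=t)) t.+1) nu (Sbil S t mu nu)) => //.
  + by apply: margPX_None => //; apply/andP.
  + by move=> b a; apply: P2_H3.
  + by move=> a; apply: P2_H4.
  + by move=> x; apply: P2_mQ.
  + by move=> a; apply: P2_q.
  + by move=> x; apply: P2_qm.
Qed.
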